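(* For every integer $d\ge6$, the polynomial $x^d-x^{d-1}-1$ has at least two roots strictly outside the closed unit disk. Moreover, as $d\to\infty$, approximately $\frac d3$ of its roots lie outside the unit disk (the number of such roots is $(\tfrac13+o(1))d$). *)

(* Defs.v *)
From HB Require Import structures.
From mathcomp Require Import all_boot all_order all_algebra algC.
Set Implicit Arguments. Unset Strict Implicit. Unset Printing Implicit Defensive.
Import Order.TTheory GRing.Theory Num.Theory.
Local Open Scope ring_scope.

Definition pd (d : nat) : {poly algC} := ('X^d - 'X^(d.-1) - 1)%R.

(* The complete list of roots (with multiplicity) of p in the algebraically
   closed field algC: p = lead_coef p * prod_(z in rootsC p) (X - z). *)
Definition rootsC (p : {poly algC}) : seq algC :=
  sval (closed_field_poly_normal p).

Definition n_out (d : nat) : nat :=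
  count (fun z : algC => 1 < `|z|) (rootsC (pd d)).

(* Main.v *)
Require Import Defs.
From HB Require Import structures.
From mathcomp Require Import all_boot all_order all_algebra algC.
From mathcomp Require Import ring lra zify.
Import Order.TTheory GRing.Theory Num.Theory.
Local Open Scope ring_scope.

(* Proof via the Schur-Cohn Hermitian form of x^d - x^(d-1) - 1:
   Phi(c) = sum_roots (|z|^2 - 1) |L_z(c)|^2, combined with explicit
   definite subspaces given by sums-of-squares decompositions. *)

Fixpoint ac (s : seq algC) (k : nat) : algC :=
  if s is z :: s' then (if k is k'.+1 then ac s' k' else 0) - z * ac s' k
  else (k == 0)%:R.
Fixpoint as_ (s : seq algC) (k : nat) : algC :=
  if s is z :: s' then as_ s' k - z^* * (if k is k'.+1 then as_ s' k' else 0)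
  else (k == 0)%:R.

Definition supp (K : nat) (c : nat -> algC) := forall j, (K <= j)%N -> c j = 0.
Definition pairw (K : nat) (w c : nat -> algC) := \sum_(0 <= j < K) w j * c j.
Definition Phi (K : nat) (s : seq algC) (c : nat -> algC) :=
  \sum_(0 <= l < K) (`|\sum_(0 <= t < K) ac s t * c (t + l)%N| ^+ 2
                    - `|\sum_(0 <= t < K) as_ s t * c (t + l)%N| ^+ 2).
Definition Tc (z : algC) (c : nat -> algC) := fun j => c j.+1 - z * c j.
Definition Tw (z : algC) (w : nat -> algC) :=
  fun j => (if j is j'.+1 then w j' else 0) - z * w j.
Fixpoint SL (s : seq algC) : seq (algC * (nat -> algC)) :=
  if s is z :: s' then (z, as_ s') :: [seq (x.1, Tw z x.2) | x <- SL s'] else [::].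

Lemma shift_sum K (f g : nat -> algC) : g K = 0 ->
  \sum_(0 <= t < K) (if t is t'.+1 then f t' else 0) * g t =
  \sum_(0 <= t < K) f t * g t.+1.
Proof.
case: K => [|K] gK; first by rewrite !big_geq.
rewrite big_nat_recl // big_nat_recr //= gK mulr0 addr0 mul0r add0r.
by [].
Qed.

Lemma pair_T K z w c : supp K c -> pairw K w (Tc z c) = pairw K (Tw z w) c.
Proof.
move=> sc; rewrite /pairw /Tc /Tw.
have -> : \sum_(0 <= j < K) ((if j is j'.+1 then w j' else 0) - z * w j) * c j
  = \sum_(0 <= j < K) (if j is j'.+1 then w j' else 0) * c j
    - z * \sum_(0 <= j < K) w j * c j.
  by rewrite mulr_sumr -sumrB; apply: eq_bigr => j _; rewrite mulrBl mulrA.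
rewrite shift_sum; last exact: sc.
by rewrite mulr_sumr -sumrB; apply: eq_bigr => j _; rewrite mulrBr !mulrA [w j * z]mulrC.
Qed.

Lemma normid (a b z : algC) :
  `|a - z * b| ^+ 2 - `|b - z^* * a| ^+ 2 = (1 - `|z| ^+ 2) * (`|a| ^+ 2 - `|b| ^+ 2).
Proof. rewrite !normCK !rmorphB !rmorphM /= ?conjCK. ring. Qed.

Lemma Phi_cons K z s c : supp K c ->
  Phi K (z :: s) c = Phi K s (Tc z c) + (`|z| ^+ 2 - 1) * `|pairw K (as_ s) c| ^+ 2.
Proof.
move=> sc.
pose u l := \sum_(0 <= t < K) as_ s t * c (t + l)%N.
have uK : u K = 0.
  by rewrite /u big1 // => t _; rewrite sc ?mulr0 // leq_addl.
have hA : forall l, \sum_(0 <= t < K) ac (z :: s) t * c (t + l)%N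
               = \sum_(0 <= t < K) ac s t * Tc z c (t + l)%N.
  move=> l /=.
  have -> : \sum_(0 <= t < K) ((if t is t'.+1 then ac s t' else 0) - z * ac s t) * c (t + l)%N
     = \sum_(0 <= t < K) (if t is t'.+1 then ac s t' else 0) * c (t + l)%N
       - z * \sum_(0 <= t < K) ac s t * c (t + l)%N.
    by rewrite mulr_sumr -sumrB; apply: eq_bigr => j _; rewrite mulrBl mulrA.
  rewrite (@shift_sum K _ (fun t => c (t + l)%N)); last by rewrite sc // leq_addr.
  rewrite mulr_sumr -sumrB; apply: eq_bigr => j _.
  by rewrite /Tc mulrBr !mulrA [ac s j * z]mulrC addSn.
have hB : forall l, \sum_(0 <= t < K) as_ (z :: s) t * c (t + l)%N = u l - z^* * u l.+1.
  move=> l /=.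
  have -> : \sum_(0 <= t < K) (as_ s t - z^* * (if t is t'.+1 then as_ s t' else 0)) * c (t + l)%N
     = u l - z^* * \sum_(0 <= t < K) (if t is t'.+1 then as_ s t' else 0) * c (t + l)%N.
    by rewrite mulr_sumr -sumrB; apply: eq_bigr => j _; rewrite mulrBl mulrA.
  rewrite (@shift_sum K _ (fun t => c (t + l)%N)); last by rewrite sc // leq_addr.
  by congr (_ - _ * _); apply: eq_bigr => j _; rewrite addSnnS.
have hC : forall l, \sum_(0 <= t < K) as_ s t * Tc z c (t + l)%N = u l.+1 - z * u l.
  move=> l; rewrite /u mulr_sumr -sumrB; apply: eq_bigr => j _.
  by rewrite /Tc mulrBr !mulrA [as_ s j * z]mulrC addnS.
rewrite /Phi.
have -> : \sum_(0 <= l < K) (`|\sum_(0 <= t < K) ac (z :: s) t * c (t + l)%N| ^+ 2 -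
     `|\sum_(0 <= t < K) as_ (z :: s) t * c (t + l)%N| ^+ 2)
  = \sum_(0 <= l < K) ((`|\sum_(0 <= t < K) ac s t * Tc z c (t + l)%N| ^+ 2 -
     `|\sum_(0 <= t < K) as_ s t * Tc z c (t + l)%N| ^+ 2)
     + (`|z| ^+ 2 - 1) * (`|u l| ^+ 2 - `|u l.+1| ^+ 2)).
  apply: eq_bigr => l _; rewrite hA hB hC.
  have := normid (u l.+1) (u l) z.
  set X := `|_| ^+ 2; set Y := `|_| ^+ 2 => h.
  rewrite -[`|u l| ^+ 2 - _]opprB mulrN -mulNr opprB.
  rewrite -h; ring.
rewrite big_split /=; congr (_ + _).
rewrite -mulr_sumr; congr (_ * _).
have -> : \sum_(0 <= i < K) (`|u i| ^+ 2 - `|u i.+1| ^+ 2)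
    = - \sum_(0 <= i < K) (`|u i.+1| ^+ 2 - `|u i| ^+ 2).
  by rewrite -sumrN; apply: eq_bigr => i _; rewrite opprB.
rewrite telescope_sumr // uK normr0 expr0n /= sub0r opprK.
by rewrite /u /pairw; congr (`|_| ^+ 2); apply: eq_bigr => t _; rewrite addn0.
Qed.

Lemma Phi_SL K s c : supp K c ->
  Phi K s c = \sum_(x <- SL s) (`|x.1| ^+ 2 - 1) * `|pairw K x.2 c| ^+ 2.
Proof.
elim: s c => [|z s IH] c sc.
  by rewrite big_nil /Phi big1 // => l _; rewrite subrr.
rewrite Phi_cons // IH; last by move=> j hj; rewrite /Tc !sc ?mulr0 ?subr0 // (leq_trans hj).
rewrite /= big_cons big_map addrC; congr (_ + _).
by apply: eq_bigr => x _ /=; rewrite pair_T.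
Qed.

Lemma SL_fst s : map fst (SL s) = s.
Proof. by elim: s => //= z s IH; rewrite -map_comp; congr (_ :: _). Qed.


Fixpoint allP {A : Type} (P : A -> Prop) (l : seq A) : Prop :=
  if l is x :: l' then P x /\ allP P l' else True.

Lemma allP_cat {A} (P : A -> Prop) l1 l2 : allP P (l1 ++ l2) <-> allP P l1 /\ allP P l2.
Proof. elim: l1 => [|x l IH] /=; first by tauto. by rewrite IH; tauto. Qed.

Lemma allP_map {A B} (P : B -> Prop) (f : A -> B) l : allP P (map f l) <-> allP (fun x => P (f x)) l.
Proof. by elim: l => //= x l ->. Qed.

Lemma allP_iota (P : nat -> Prop) a n : allP P (iota a n) -> forall k, (a <= k)%N -> (k < a + n)%N -> P k.
Proof.
elim: n a => [|n IH] a /=; first by move=> _ k h1 h2; lia.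
move=> [Pa H] k h1 h2; case: (ltngtP a k) => h; last by rewrite -h.
- by apply: (IH a.+1) => //; lia.
- lia.
Qed.

Lemma allP_nth {A} (P : A -> Prop) x0 l : (forall i, (i < size l)%N -> P (nth x0 l i)) -> allP P l.
Proof.
elim: l => //= x l IH H; split; first by apply: (H 0%N).
by apply: IH => i hi; apply: (H i.+1).
Qed.

Lemma kernel_exists K (G : seq (nat -> algC)) : (size G < K)%N ->
  exists c, supp K c /\ (exists j, (j < K)%N /\ c j != 0) /\ allP (fun g => pairw K g c = 0) G.
Proof.
case: K => [|K] // hG.
pose M : 'M[algC]_(K.+1, size G) := \matrix_(j, i) nth (fun _ => 0) G i j.
have rk : (0 < \rank (kermx M))%N.
  rewrite mxrank_ker; have := rank_leq_col M; lia.
have : kermx M != 0 by apply: contraTneq rk => ->; rewrite mxrank0.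
move=> nz.
have : [exists i, [exists j, kermx M i j != 0]].
  apply: contraR nz; rewrite negb_exists => /forallP H0.
  apply/eqP/matrixP => i j.
  have := H0 i; rewrite negb_exists => /forallP/(_ j); rewrite negbK => /eqP ->.
  by rewrite [RHS]mxE.
case/existsP => i /existsP [j0 hj0].
pose v := row i (kermx M).
have vM : v *m M = 0 by apply/sub_kermxP; exact: row_sub.
exists (fun j => if (j < K.+1)%N then v 0 (inord j) else 0); split; last split.
- by move=> j hj; rewrite ltnNge hj.
- exists j0; split; first exact: ltn_ord.
  by rewrite ltn_ord /v mxE inord_val.
- apply: (allP_nth _ (fun _ => 0)) => k hk.
  have h := congr1 (fun A : 'M[algC]_(1, size G) => A 0 (Ordinal hk)) vM; rewrite /= !mxE in h.
  rewrite -[RHS]h /pairw big_mkord; apply: eq_bigr => j _.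
  by rewrite ltn_ord inord_val [M _ _]mxE mulrC.
Qed.

Definition outp (x : algC * (nat -> algC)) := 1 < `|x.1|.

Lemma sum_le0 K c (L : seq (algC * (nat -> algC))) :
  allP (fun g => pairw K g c = 0) [seq x.2 | x <- filter outp L] ->
  \sum_(x <- L) (`|x.1| ^+ 2 - 1) * `|pairw K x.2 c| ^+ 2 <= 0.
Proof.
elim: L => [|x L IH]; first by rewrite big_nil.
rewrite big_cons /=; case: ifP => hx /=.
  by case=> -> H; rewrite normr0 expr0n /= mulr0 add0r; apply: IH.
move=> H.
have h1 : (`|x.1| ^+ 2 - 1) * `|pairw K x.2 c| ^+ 2 <= 0.
  rewrite mulr_le0_ge0 // ?exprn_ge0 // subr_le0.
  have h : `|x.1| <= 1.
    by rewrite real_leNgt ?realE ?normr_ge0 ?ler01 //; rewrite /outp in hx; rewrite hx.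
  by rewrite exprn_ile1.
by apply: (le_trans (lerD h1 (IH H))); rewrite addr0.
Qed.

Lemma sum_ge0 K c (L : seq (algC * (nat -> algC))) :
  allP (fun g => pairw K g c = 0) [seq x.2 | x <- filter (predC outp) L] ->
  0 <= \sum_(x <- L) (`|x.1| ^+ 2 - 1) * `|pairw K x.2 c| ^+ 2.
Proof.
elim: L => [|x L IH]; first by rewrite big_nil.
rewrite big_cons /=; case: ifP => hx /=.
  by case=> -> H; rewrite normr0 expr0n /= mulr0 add0r; apply: IH.
move=> H; apply: addr_ge0; last exact: IH H.
rewrite mulr_ge0 // ?exprn_ge0 // subr_ge0.
move/negbFE: hx; rewrite /outp => h.
by rewrite exprn_ege1 // ltW.
Qed.


Lemma count_SL (P : pred algC) s : count (fun x : algC * (nat -> algC) => P x.1) (SL s) = count P s.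
Proof. by rewrite -[in RHS](SL_fst s) count_map. Qed.

Lemma lower_bound K s (F : seq (nat -> algC)) :
  (forall c, supp K c -> (exists j, (j < K)%N /\ c j != 0) ->
     allP (fun g => pairw K g c = 0) F -> 0 < Phi K s c) ->
  (K <= size F + count (fun z : algC => (1 < `|z|)%R) s)%N.
Proof.
move=> H; rewrite leqNgt; apply/negP => hlt.
pose G := F ++ [seq x.2 | x <- filter outp (SL s)].
have hG : (size G < K)%N.
  by rewrite size_cat size_map size_filter /outp (count_SL (fun z => 1 < `|z|)).
have [c [sc [nz hc]]] := kernel_exists _ _ hG.
move: hc; rewrite allP_cat => -[hF hO].
have := H c sc nz hF; rewrite Phi_SL //.
by rewrite lt_leAnge; have -> := sum_le0 _ _ _ hO; rewrite andbF.
Qed.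

Lemma upper_bound K s (F : seq (nat -> algC)) :
  (forall c, supp K c -> (exists j, (j < K)%N /\ c j != 0) ->
     allP (fun g => pairw K g c = 0) F -> Phi K s c < 0) ->
  (K <= size F + count (predC (fun z : algC => (1 < `|z|)%R)) s)%N.
Proof.
move=> H; rewrite leqNgt; apply/negP => hlt.
pose G := F ++ [seq x.2 | x <- filter (predC outp) (SL s)].
have hG : (size G < K)%N.
  by rewrite size_cat size_map size_filter /outp (count_SL (predC (fun z => 1 < `|z|))).
have [c [sc [nz hc]]] := kernel_exists _ _ hG.
move: hc; rewrite allP_cat => -[hF hO].
have := H c sc nz hF; rewrite Phi_SL //.
by rewrite lt_leAnge; have -> := sum_ge0 _ _ _ hO; rewrite andbF.
Qed.


Lemma ac_poly s k : ac s k = (\prod_(z <- s) ('X - z%:P))`_k.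
Proof.
elim: s k => [|z s IH] k /=; first by rewrite big_nil coef1.
rewrite big_cons mulrBl coefB coefXM coefCM IH.
by case: k => [|k] //=; rewrite IH.
Qed.

Lemma ac_out s k : (size s < k)%N -> ac s k = 0.
Proof.
rewrite ac_poly => h; apply: nth_default.
by rewrite size_prod_XsubC.
Qed.

Lemma as_ac s k : as_ s k = if (k <= size s)%N then (ac s (size s - k))^* else 0.
Proof.
elim: s k => [|z s IH] k /=.
  by case: k => [|k] //=; rewrite conjC1.
set m := size s.
case: (ltngtP k m.+1) => hk.
- have e : (m.+1 - k = (m - k).+1)%N by lia.
  rewrite e /= rmorphB rmorphM IH.
  have -> : (k <= m)%N by lia.
  case: k hk e => [|k] hk e /=.
    by rewrite -/m !subn0 (ac_out s m.+1) ?rmorph0 ?mulr0 // /m.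
  rewrite IH -/m; have -> : (k <= m)%N by lia.
  by have -> : (m - k = (m - k.+1).+1)%N by lia.
  case: k hk => [|k] hk //=; rewrite !IH -/m.
  have -> : (k.+1 <= m)%N = false by lia.
  have -> : (k <= m)%N = false by lia.
  by rewrite mulr0 subr0.
- rewrite hk subnn /= !IH -/m.
  have -> : (m.+1 <= m)%N = false by lia.
  rewrite leqnn subnn sub0r sub0r rmorphN rmorphM.
  by [].
Qed.

Lemma pd_split d : pd d = 'X^d + (- 'X^(d.-1) - 1).
Proof. by rewrite /pd addrA. Qed.

Lemma size_q d : (2 <= d)%N -> (size ((- 'X^(d.-1) - 1)%R : {poly algC}) < size ('X^d : {poly algC}))%N.
Proof.
move=> hd; rewrite size_polyXn.
apply: (leq_ltn_trans (size_polyD _ _)).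
rewrite size_polyN size_polyN size_polyXn size_poly1; lia.
Qed.

Lemma prod_pd d : (2 <= d)%N -> \prod_(z <- rootsC (pd d)) ('X - z%:P) = pd d.
Proof.
move=> hd; have e := svalP (closed_field_poly_normal (pd d)).
rewrite /rootsC; move: e; set r := sval _ => e.
have hl : lead_coef (pd d) = 1.
  by rewrite pd_split lead_coefDl ?size_q // lead_coefXn.
by rewrite [in RHS]e hl scale1r.
Qed.

Lemma size_roots d : (2 <= d)%N -> size (rootsC (pd d)) = d.
Proof.
move=> hd; have := congr1 (fun p : {poly algC} => size p) (prod_pd _ hd) => /=.
rewrite size_prod_XsubC pd_split size_polyDl ?size_q // size_polyXn.
by case.
Qed.

Lemma pd_coef d t : (pd d)`_t = (t == d)%:R - (t == d.-1)%:R - (t == 0)%:R.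
Proof. by rewrite /pd !coefB !coefXn coef1. Qed.

Lemma ac_pd d t : (2 <= d)%N -> (t < d)%N ->
  ac (rootsC (pd d)) t = - (t == d.-1)%:R - (t == 0)%:R.
Proof.
move=> hd ht; rewrite ac_poly prod_pd // pd_coef.
have -> : (t == d) = false by apply/eqP => h; lia. by rewrite sub0r.
Qed.

Lemma as_pd d t : (2 <= d)%N -> (t < d)%N ->
  as_ (rootsC (pd d)) t = (t == 0)%:R - (t == 1)%:R.
Proof.
move=> hd ht; rewrite as_ac size_roots // ifT; last lia.
rewrite ac_poly prod_pd // pd_coef.
have -> : ((d - t)%N == d) = (t == 0%N) by apply/eqP/eqP => h; lia.
have -> : ((d - t)%N == d.-1) = (t == 1%N) by apply/eqP/eqP => h; lia.
have -> : ((d - t)%N == 0%N) = false by apply/eqP => h; lia.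
by rewrite subr0 rmorphB !rmorph_nat.
Qed.

Definition Psi (d : nat) (c : nat -> algC) :=
  \sum_(0 <= l < d) (`|c l + c (d.-1 + l)%N| ^+ 2 - `|c l - c l.+1| ^+ 2).

Lemma sum_delta n k (g : nat -> algC) :
  \sum_(0 <= t < n) (t == k)%:R * g t = if (k < n)%N then g k else 0.
Proof.
elim: n => [|n IH]; first by rewrite big_geq.
rewrite big_nat_recr // IH /=.
case: (ltngtP k n) => h.
- have -> : (k < n.+1)%N = true by lia.
  by rewrite mul0r addr0.
- have -> : (k < n.+1)%N = false by lia.
  by rewrite mul0r addr0.
- by rewrite h ltnSn mul1r add0r.
Qed.

Lemma Phi_pd d c : (2 <= d)%N -> supp d c -> Phi d (rootsC (pd d)) c = Psi d c.
Proof.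
move=> hd sc; rewrite /Phi /Psi; apply: eq_bigr => l _.
have h1 : \sum_(0 <= t < d) ac (rootsC (pd d)) t * c (t + l)%N = - (c l + c (d.-1 + l)%N).
  rewrite (eq_big_nat _ _ (F2 := fun t => - ((t == d.-1)%:R * c (t + l)%N) - (t == 0)%:R * c (t + l)%N)); last first.
    by move=> t /andP [_ ht]; rewrite ac_pd // mulrBl mulNr.
  rewrite sumrB sumrN !sum_delta ifT ?ifT ?add0n; last 2 first.
  - lia.
  - lia.
  by rewrite opprD addrC.
have h2 : \sum_(0 <= t < d) as_ (rootsC (pd d)) t * c (t + l)%N = c l - c l.+1.
  rewrite (eq_big_nat _ _ (F2 := fun t => (t == 0)%:R * c (t + l)%N - (t == 1)%:R * c (t + l)%N)); last first.
    by move=> t /andP [_ ht]; rewrite as_pd // mulrBl.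
  rewrite sumrB !sum_delta ifT ?ifT ?add0n ?add1n //; lia.
by rewrite h1 h2 normrN.
Qed.


Definition dl (k : nat) : nat -> algC := fun j => (j == k)%:R.
Definition bA (b : nat) : nat -> algC := fun j => dl b j - dl b.+1 j.
Definition bE (b : nat) : nat -> algC := fun j => dl b.+1 j - dl b.+2 j + dl b.+3 j.
Definition al (b : nat) : nat -> algC := fun j => dl b.+1 j + dl b.+3 j.

Lemma pairB K w1 w2 c : pairw K (fun j => w1 j - w2 j) c = pairw K w1 c - pairw K w2 c.
Proof. by rewrite /pairw -sumrB; apply: eq_bigr => j _; rewrite mulrBl. Qed.
Lemma pairD K w1 w2 c : pairw K (fun j => w1 j + w2 j) c = pairw K w1 c + pairw K w2 c.
Proof. by rewrite /pairw -big_split; apply: eq_bigr => j _; rewrite mulrDl. Qed.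
Lemma pair_dl K k c : (k < K)%N -> pairw K (dl k) c = c k.
Proof. by move=> hk; rewrite /pairw /dl sum_delta hk. Qed.

Lemma pair_bA K b c : (b.+1 < K)%N -> pairw K (bA b) c = c b - c b.+1.
Proof. by move=> h; rewrite /bA pairB !pair_dl //; lia. Qed.
Lemma pair_bE K b c : (b.+3 < K)%N -> pairw K (bE b) c = c b.+1 - c b.+2 + c b.+3.
Proof. by move=> h; rewrite /bE pairD pairB !pair_dl //; lia. Qed.
Lemma pair_al K b c : (b.+3 < K)%N -> pairw K (al b) c = c b.+1 + c b.+3.
Proof. by move=> h; rewrite /al pairD !pair_dl //; lia. Qed.

Definition Q (b : nat) (c : nat -> algC) :=
  `|c b.+1 + c b.+3| ^+ 2 - `|c b - c b.+1| ^+ 2 - `|c b.+1 - c b.+2 + c b.+3| ^+ 2.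

Lemma block c J : c 0%N = 0 ->
  \sum_(0 <= l < 3 * J + 1) (`|c l| ^+ 2 - `|c l - c l.+1| ^+ 2)
  = \sum_(0 <= j < J) Q (3 * j + 1) c - `|c (3 * J + 1)%N| ^+ 2.
Proof.
move=> c0; elim: J => [|J IH].
  by rewrite muln0 add0n big_nat1 big_geq // c0 normr0 expr0n /= !sub0r normrN.
have e : (3 * J.+1 + 1 = (3 * J + 1).+3)%N by lia.
rewrite e !big_nat_recr //= ?IH.
rewrite /Q.
set b := (3 * J + 1)%N.
rewrite !normCK !(rmorphB, rmorphD) /=.
ring.
Qed.

Lemma Psi_supp d J c : (3 * J + 2 <= d)%N -> c 0%N = 0 ->
  (forall i, (3 * J + 1 <= i)%N -> c i = 0) ->
  Psi d c = \sum_(0 <= j < J) Q (3 * j + 1) c.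
Proof.
move=> hd c0 cz; rewrite /Psi.
rewrite (eq_big_nat _ _ (F2 := fun l => `|c l| ^+ 2 - `|c l - c l.+1| ^+ 2)); last first.
  by move=> l _; rewrite (cz (d.-1 + l)%N) ?addr0 //; lia.
rewrite (@big_cat_nat _ _ _ (3 * J + 1)%N) //=; last lia.
rewrite block // cz // normr0 expr0n /= subr0.
rewrite [X in _ + X](eq_big_nat _ _ (F2 := fun _ => 0)); last first.
  by move=> l /andP [h1 h2]; rewrite !cz ?subrr ?normr0 ?expr0n ?subrr //; lia.
by rewrite big1_eq addr0.
Qed.

Lemma psum0 J (F : nat -> algC) : (forall j, 0 <= F j) ->
  \sum_(0 <= j < J) F j = 0 -> forall j, (j < J)%N -> F j = 0.
Proof.
move=> F0; elim: J => [|J IH]; first by [].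
rewrite big_nat_recr //= => /eqP; rewrite paddr_eq0 ?F0 ?sumr_ge0 //.
case/andP => /eqP h1 /eqP h2 j hj.
case: (ltngtP j J) => h; [exact: IH | lia | by rewrite h].
Qed.

Lemma kill J (c : nat -> algC) : c 0%N = 0 ->
  (forall i, (3 * J + 1 <= i)%N -> c i = 0) ->
  (forall j, (j < J)%N -> let b := (3 * j + 1)%N in
     [/\ c b.+1 + c b.+3 = 0, c b - c b.+1 = 0 & c b.+1 - c b.+2 + c b.+3 = 0]) ->
  forall i, c i = 0.
Proof.
move=> c0 cz H.
suff S : forall m, (m <= J)%N -> forall i, (3 * (J - m) + 1 <= i)%N -> c i = 0.
  by case=> [//|i]; apply: (S J) => //; lia.
elim=> [|m IH] hm i hi; first by apply: cz; lia.
have [h1 h2 h3] := H (J - m.+1)%N ltac:(lia).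
set b := (3 * (J - m.+1) + 1)%N in h1 h2 h3.
have e3 : c b.+3 = 0 by apply: IH; lia.
rewrite e3 addr0 in h1.
have e1 : c b.+1 = 0 by [].
rewrite e1 subr0 in h2; rewrite e1 e3 sub0r addr0 in h3.
have e2 : c b.+2 = 0 by rewrite -[c b.+2]opprK h3 oppr0.
have : (i = b \/ i = b.+1 \/ i = b.+2) \/ (3 * (J - m) + 1 <= i)%N by lia.
case=> [[->|[->|->]]|hi'] //; apply: IH => //; lia.
Qed.

Lemma sqn_ge0 (x : algC) : 0 <= `|x| ^+ 2.
Proof. by rewrite exprn_ge0. Qed.

Lemma sqn_eq0 (x : algC) : `|x| ^+ 2 = 0 -> x = 0.
Proof. by move/eqP; rewrite expf_eq0 /= normr_eq0 => /eqP. Qed.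

Lemma n_out_lower d : (2 <= d)%N -> ((d - 2) %/ 3 <= n_out d)%N.
Proof.
move=> hd; set J := ((d - 2) %/ 3)%N.
have hJ : (3 * J + 2 <= d)%N by rewrite /J; lia.
pose F := dl 0 :: [seq dl k | k <- iota (3 * J + 1) (d - (3 * J + 1))]
  ++ [seq bA (3 * j + 1) | j <- iota 0 J] ++ [seq bE (3 * j + 1) | j <- iota 0 J].
have := @lower_bound d (rootsC (pd d)) F.
rewrite /n_out /F /= !size_cat !size_map !size_iota.
move=> H; suff: (d <= (d - (3 * J + 1) + (J + J)).+1 + count (fun z : algC => (1 < `|z|)%R) (rootsC (pd d)))%N by lia.
apply: H => c sc [j0 [hj0 nz]] /= [h0 hF].
move: hF; rewrite !allP_cat !allP_map => -[hk [hA hE]].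
rewrite Phi_pd //.
have c0 : c 0%N = 0 by rewrite pair_dl in h0 => //; lia.
have cz : forall i, (3 * J + 1 <= i)%N -> c i = 0.
  move=> i hi; case: (ltnP i d) => hid; last exact: sc.
  by have := allP_iota _ _ _ hk i hi ltac:(lia); rewrite pair_dl.
have hA' : forall j, (j < J)%N -> c (3 * j + 1)%N - c (3 * j + 1).+1 = 0.
  by move=> j hj; have := allP_iota _ _ _ hA j (leq0n _) hj; rewrite pair_bA //; lia.
have hE' : forall j, (j < J)%N -> c (3 * j + 1).+1 - c (3 * j + 1).+2 + c (3 * j + 1).+3 = 0.
  by move=> j hj; have := allP_iota _ _ _ hE j (leq0n _) hj; rewrite pair_bE //; lia.
rewrite (Psi_supp _ _ _ hJ c0 cz).
rewrite (eq_big_nat _ _ (F2 := fun j => `|c (3 * j + 1).+1 + c (3 * j + 1).+3| ^+ 2)); last first.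
  by move=> j /andP [_ hj]; rewrite /Q hA' // hE' // normr0 expr0n /= !subr0.
rewrite lt0r sumr_ge0 ?andbT; last by move=> j _; apply: sqn_ge0.
apply/eqP => hs; move: nz; rewrite (kill _ _ c0 cz) ?eqxx //.
move=> j hj b; split.
- apply: sqn_eq0.
  apply: (psum0 _ (fun j => `|c (3 * j + 1).+1 + c (3 * j + 1).+3| ^+ 2) _ hs j hj).
  by move=> i; apply: sqn_ge0.
- exact: hA'.
- exact: hE'.
Qed.

Lemma n_out_upper d : (2 <= d)%N -> (n_out d <= d - 2 * ((d - 2) %/ 3))%N.
Proof.
move=> hd; set J := ((d - 2) %/ 3)%N.
have hJ : (3 * J + 2 <= d)%N by rewrite /J; lia.
pose F := dl 0 :: [seq dl k | k <- iota (3 * J + 1) (d - (3 * J + 1))]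
  ++ [seq al (3 * j + 1) | j <- iota 0 J].
have := @upper_bound d (rootsC (pd d)) F.
have hc := count_predC (fun z : algC => (1 < `|z|)%R) (rootsC (pd d)).
rewrite size_roots // in hc.
rewrite /n_out /F /= !size_cat !size_map !size_iota.
move=> H; suff: (d <= (d - (3 * J + 1) + J).+1 + count (predC (fun z : algC => (1 < `|z|)%R)) (rootsC (pd d)))%N by lia.
apply: H => c sc [j0 [hj0 nz]] /= [h0 hF].
move: hF; rewrite !allP_cat !allP_map => -[hk hA].
rewrite Phi_pd //.
have c0 : c 0%N = 0 by rewrite pair_dl in h0 => //; lia.
have cz : forall i, (3 * J + 1 <= i)%N -> c i = 0.
  move=> i hi; case: (ltnP i d) => hid; last exact: sc.
  by have := allP_iota _ _ _ hk i hi ltac:(lia); rewrite pair_dl.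
have hA' : forall j, (j < J)%N -> c (3 * j + 1).+1 + c (3 * j + 1).+3 = 0.
  by move=> j hj; have := allP_iota _ _ _ hA j (leq0n _) hj; rewrite pair_al //; lia.
rewrite (Psi_supp _ _ _ hJ c0 cz).
pose G j := `|c (3 * j + 1)%N - c (3 * j + 1).+1| ^+ 2
            + `|c (3 * j + 1).+1 - c (3 * j + 1).+2 + c (3 * j + 1).+3| ^+ 2.
have G0 : forall j, 0 <= G j by move=> j; rewrite addr_ge0 // sqn_ge0.
rewrite (eq_big_nat _ _ (F2 := fun j => - G j)); last first.
  by move=> j /andP [_ hj]; rewrite /Q hA' // normr0 expr0n /= sub0r opprD.
rewrite sumrN oppr_lt0 lt0r sumr_ge0 ?andbT; last by move=> j _; apply: G0.
apply/eqP => hs; move: nz; rewrite (kill _ _ c0 cz) ?eqxx //.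
move=> j hj b.
have := psum0 _ _ G0 hs j hj; move/eqP; rewrite paddr_eq0 ?sqn_ge0 //.
case/andP => /eqP /sqn_eq0 e1 /eqP /sqn_eq0 e2; split => //.
exact: hA'.
Qed.

Lemma n_out_ge2 d : (6 <= d)%N -> (2 <= n_out d)%N.
Proof.
move=> hd.
pose F := [seq dl k | k <- iota 4 (d - 5)] ++
  [:: bA 1; bA 2; fun i => dl 0 i - dl d.-1 i].
have := @lower_bound d (rootsC (pd d)) F.
rewrite /n_out /F /= !size_cat !size_map !size_iota /=.
move=> H; suff: (d <= (d - 5) + 3 + count (fun z : algC => (1 < `|z|)%R) (rootsC (pd d)))%N by lia.
apply: H => c sc [j0 [hj0 nz]].
rewrite allP_cat allP_map /= => -[hk [h1 [h2 [h3 _]]]].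
rewrite Phi_pd; last exact: sc; last lia.
rewrite pair_bA in h1; last lia.
rewrite pair_bA in h2; last lia.
rewrite pairB !pair_dl in h3; try lia.
have cm : forall k, (4 <= k)%N -> (k <= d - 2)%N -> c k = 0.
  by move=> k hk1 hk2; have := allP_iota _ _ _ hk k hk1 ltac:(lia); rewrite pair_dl //; lia.
have e21 : c 2%N = c 1%N by apply/eqP; rewrite eq_sym -subr_eq0 h1.
have e32 : c 3%N = c 1%N by rewrite -e21; apply/eqP; rewrite eq_sym -subr_eq0 h2.
have ey : c d.-1 = c 0%N by apply/eqP; rewrite eq_sym -subr_eq0 h3.
set x := c 1%N; set y := c 0%N.
have hPsi : Psi d c = `|x + y| ^+ 2 + `|y| ^+ 2.
  rewrite /Psi.
  have e : d = ((d - 6) + 6)%N by lia.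
  move: ey cm sc; rewrite e; set e' := (d - 6)%N => ey cm sc.
  rewrite (@big_cat_nat _ _ _ 4) //=; last lia.
  rewrite (@big_cat_nat _ _ _ (e' + 4)%N 4) //=; last lia.
  rewrite [X in _ + (X + _)](eq_big_nat _ _ (F2 := fun _ => 0)); last first.
    move=> l /andP [l1 l2]; rewrite (cm l) ?(cm l.+1) ?sc ?subrr ?addr0 ?normr0 ?expr0n ?subrr //; lia.
  rewrite big1_eq add0r.
  have s1 : forall f : nat -> algC, \sum_(0 <= i < 4) f i = f 0%N + f 1%N + f 2%N + f 3%N.
    by move=> f; rewrite !big_nat_recr //= big_geq // add0r.
  have s2 : forall (f : nat -> algC) m, \sum_(m <= i < m.+2) f i = f m + f m.+1.
    by move=> f m; rewrite !big_nat_recr //= big_geq // add0r.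
  have -> : ((e' + 6) = (e' + 4).+2)%N by lia.
  rewrite s1 s2 /= addn0.
  have ey' : c (e' + 4).+1 = c 0%N by rewrite -ey; congr c; lia.
  rewrite (sc ((e' + 4).+1 + 1)%N) ?(sc ((e' + 4).+1 + 2)%N) ?(sc ((e' + 4).+1 + 3)%N); try lia.
  rewrite (sc ((e' + 4).+1 + (e' + 4))%N) ?(sc ((e' + 4).+1 + (e' + 4).+1)%N) ?(sc (e' + 4).+2); try lia.
  rewrite (cm 4%N) ?(cm (e' + 4)%N); try lia.
  rewrite ey' e21 e32 -/x -/y.
  rewrite !normCK !(rmorphB, rmorphD, rmorph0) /=; ring.
- lia.
have hx : forall k, c k = 0 \/ c k = x \/ c k = y.
  move=> k; case: (ltnP k d) => hkd; last by left; apply: sc.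
  have : (k = 0 \/ k = 1 \/ k = 2 \/ k = 3 \/ k = d.-1 \/ (4 <= k <= d - 2))%N by lia.
  case=> [->|[->|[->|[->|[->|/andP [k1 k2]]]]]].
  - by right; right.
  - by right; left.
  - by rewrite e21; right; left.
  - by rewrite e32; right; left.
  - by rewrite ey; right; right.
  - by left; apply: cm.
rewrite hPsi lt0r addr_ge0 ?sqn_ge0 // andbT.
apply/eqP => hs; move/eqP: hs; rewrite paddr_eq0 ?sqn_ge0 //.
case/andP => /eqP /sqn_eq0 hxy /eqP /sqn_eq0 hy0.
rewrite hy0 addr0 in hxy.
by move: nz; have [->|[->|->]] := hx j0; rewrite ?hxy ?hy0 eqxx.
Qed.


Theorem mainTheorem14 :
  (forall d : nat, (6 <= d)%N -> (2 <= n_out d)%N) /\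
  (forall eps : rat, 0 < eps ->
     exists N : nat, forall d : nat, (N <= d)%N ->
       `| (n_out d)%:R / d%:R - 3%:R^-1 | < eps).
Proof.
split; first exact: n_out_ge2.
move=> eps he.
have hb := @archi_boundP _ (3 / eps) ltac:(by rewrite divr_ge0 // ltW).
exists (maxn 6 (Num.Def.archi_bound (3 / eps))) => d hd.
have hd6 : (6 <= d)%N by move: hd; rewrite geq_max => /andP [].
have hdb : (Num.Def.archi_bound (3 / eps) <= d)%N by move: hd; rewrite geq_max => /andP [].
have hl := n_out_lower d ltac:(lia).
have hu := n_out_upper d ltac:(lia).
set n := n_out d in hl hu *.
have h1 : (3 * n <= d + 8)%N by lia.
have h2 : (d <= 3 * n + 4)%N by lia.
have r1 : 3 * (n%:R : rat) <= d%:R + 8.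
  by have := h1; rewrite -(ler_nat rat) natrD natrM.
have r2 : (d%:R : rat) <= 3 * n%:R + 4.
  by have := h2; rewrite -(ler_nat rat) natrD natrM.
have D0 : (0 : rat) < d%:R by rewrite ltr0n; lia.
have r3 : 3 < eps * d%:R.
  have : 3 / eps < d%:R.
    apply: (lt_le_trans hb); by rewrite ler_nat.
  by rewrite ltr_pdivrMr // mulrC.
have -> : (n%:R : rat) / d%:R - 3%:R^-1 = (3 * n%:R - d%:R) / (3 * d%:R).
  by field; rewrite (gt_eqF D0).
rewrite ltr_norml ltr_pdivrMr ?ltr_pdivlMr ?mulr_gt0 //.
apply/andP; split; lra.
Qed.
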